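(* Let $a,b$ be positive integers with $a\le b$, and suppose that every nonnegative integer $n$ can be written as $ax^2+by^2+(z^2+zw+w^2)$ with $x,y,z,w\in\mathbb{Z}$. Then $a\in\{1,2\}$. *)

(* Defs.v *)
From Stdlib Require Import ZArith.
Open Scope Z_scope.

Definition represents (a b n : Z) : Prop :=
  exists x y z w : Z, n = a * x ^ 2 + b * y ^ 2 + (z ^ 2 + z * w + w ^ 2).

(* Main.v *)
Require Import Defs.
From Stdlib Require Import ZArith Lia.
Open Scope Z_scope.

Lemma q_ne2 (z w : Z) : z ^ 2 + z * w + w ^ 2 <> 2.
Proof.
  intro H.
  assert (Hw : -1 <= w <= 1) by nia.
  assert (Hz : -2 <= z <= 2) by nia.
  destruct Hw as [Hw1 Hw2]; destruct Hz as [Hz1 Hz2].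
  assert (w = -1 \/ w = 0 \/ w = 1) as Hw by lia.
  assert (z = -2 \/ z = -1 \/ z = 0 \/ z = 1 \/ z = 2) as Hz by lia.
  destruct Hw as [Hw|[Hw|Hw]]; destruct Hz as [Hz|[Hz|[Hz|[Hz|Hz]]]];
    subst; simpl in H; lia.
Qed.

Theorem lemma3p1 (a b : Z) (ha : 0 < a) (hb : 0 < b) (hab : a <= b)
  (huniv : forall n : Z, 0 <= n -> represents a b n) :
  a = 1 \/ a = 2.
Proof.
  destruct (Z_lt_le_dec a 3) as [H|H]; [lia|].
  exfalso.
  destruct (huniv 2 ltac:(lia)) as [x [y [z [w E]]]].
  assert (Q0 : 0 <= z ^ 2 + z * w + w ^ 2) by nia.
  assert (X0 : 0 <= x ^ 2) by nia.
  assert (Y0 : 0 <= y ^ 2) by nia.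
  assert (x = 0) by (destruct (Z.eq_dec x 0); [auto| nia]).
  assert (y = 0) by (destruct (Z.eq_dec y 0); [auto| nia]).
  subst x y. apply (q_ne2 z w). lia.
Qed.
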